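(* Let $\mathcal{R}$ be the hyperfinite $II_1$ factor with normalized trace $\tau$, realized as the weak closure of the increasing union $\bigcup_{j\ge0} M_{2^j}(\mathbb{C})$, and let $P_n$ be the orthogonal projection of $L^2(\mathcal{R},\tau)$ onto $M_{2^n}(\mathbb{C})$. Let $(\mathcal{E},D(\mathcal{E}))$ be a Dirichlet form on $L^2(\mathcal{R},\tau)$ with $D(\mathcal{E})\supseteq\bigcup_{j\ge0}M_{2^j}(\mathbb{C})$, and set $\mathcal{E}_n(a)=\mathcal{E}(P_na)$. If $\lim_{n\to\infty}\mathcal{E}_n(a)=\mathcal{E}(a)$ for all $a\in D(\mathcal{E})$, then $\bigcup_{j\ge0}M_{2^j}(\mathbb{C})$ is a form core for $\mathcal{E}$, i.e. it is dense in $D(\mathcal{E})$ with respect to the norm $\|a\|_1=(\mathcal{E}(a)+\|a\|_2^2)^{1/2}$.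
   Context: $M_{2^n}(\mathbb{C})$ is embedded in $M_{2^{n+1}}(\mathbb{C})$ via $a\mapsto \mathrm{diag}(a,a)$. $L^2(\mathcal{R},\tau)$ is the completion of $\mathcal{R}$ in $\|a\|_2=\tau(a^*a)^{1/2}$; $J$ is the antilinear isometry extending $a\mapsto a^*$; $L^2_+$ is the closure of the positive elements; for real ($J$-invariant) $a$, $a\wedge1$ is the Hilbert projection of $a$ onto the $L^2$-closure of $\{b\in L^2_+: b\le 1\}$. A Dirichlet form is a closed, densely defined, nonnegative quadratic form on $L^2(\mathcal{R},\tau)$ that is real ($D(\mathcal{E})$ is $J$-invariant and $\mathcal{E}(Ja)=\mathcal{E}(a)$) and satisfies $\mathcal{E}(a\wedge1)\le\mathcal{E}(a)$ for real $a\in D(\mathcal{E})$. *)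

(* Defs.v *)
From HB Require Import structures.
From mathcomp Require Import all_boot all_order all_algebra.
From mathcomp Require Import complex.
From mathcomp Require Import reals.
Set Implicit Arguments. Unset Strict Implicit. Unset Printing Implicit Defensive.
Import Order.TTheory GRing.Theory Num.Theory.
Local Open Scope ring_scope.

Section Defs.
Variable R : realType.
Local Notation C := (R[i]).

Definition adjmx (k : nat) (a : 'M[C]_k) : 'M[C]_k := map_mx (@conjc R) a^T.

Definition psd (k : nat) (a : 'M[C]_k) : Prop := exists b : 'M[C]_k, a = adjmx b *m b.

(* the embedding M_{2^n} -> M_{2^{n+1}}, a |-> diag(a,a) *)
Lemma dbl_eq (n : nat) : (2 ^ n + 2 ^ n = 2 ^ n.+1)%N.
Proof. by rewrite expnS mul2n addnn. Qed.

Definition diag2 (n : nat) (a : 'M[C]_(2 ^ n)) : 'M[C]_(2 ^ n.+1) :=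
  castmx (dbl_eq n, dbl_eq n) (block_mx a 0 0 a).

(* normalized trace inner product <a,b> = tau(a^* b) on M_{2^n} *)
Definition trip (n : nat) (a b : 'M[C]_(2 ^ n)) : C :=
  \tr (adjmx a *m b) / (2 ^ n)%:R.

Variable H : lmodType C.
Variable ip : H -> H -> C.     (* inner product, linear in 2nd argument *)

Definition hnorm (x : H) : R := Num.sqrt (complex.Re (ip x x)).

Definition hilbert_space : Prop :=
  [/\ (forall x y z (c : C), ip x (c *: y + z) = c * ip x y + ip x z),
      (forall x y, ip y x = conjc (ip x y)),
      (forall x, complex.Im (ip x x) = 0 /\ 0 <= complex.Re (ip x x)),
      (forall x, complex.Re (ip x x) = 0 -> x = 0) &
      (forall u : nat -> H,
         (forall e : R, 0 < e -> exists N, forall k l, (N <= k)%N -> (N <= l)%N ->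
            hnorm (u k - u l) < e) ->
         exists x, forall e : R, 0 < e -> exists N, forall k, (N <= k)%N ->
            hnorm (u k - x) < e)].

(* iota : union_n M_{2^n}(C) -> H realizing H as L^2(R,tau):
   compatible with a |-> diag(a,a), linear, trace-isometric, dense range. *)
Variable iota : forall (n : nat), 'M[C]_(2 ^ n) -> H.
Arguments iota : clear implicits.

Definition is_L2_hyperfinite : Prop :=
  [/\ (forall n a, iota n.+1 (diag2 a) = iota n a),
      (forall n (c : C) a b, iota n (c *: a + b) = c *: iota n a + iota n b),
      (forall n a b, ip (iota n a) (iota n b) = trip a b) &
      (forall x (e : R), 0 < e -> exists n a, hnorm (x - iota n a) < e)].

Definition l2closure (S : H -> Prop) (x : H) : Prop :=
  forall e : R, 0 < e -> exists y, S y /\ hnorm (x - y) < e.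

Definition in_union (x : H) : Prop := exists n a, x = iota n a.

Definition is_J (J : H -> H) : Prop :=
  [/\ (forall (c : C) x y, J (c *: x + y) = conjc c *: J x + J y),
      (forall x, hnorm (J x) = hnorm x) &
      (forall n a, J (iota n a) = iota n (adjmx a))].

Definition L2pos : H -> Prop := l2closure (fun y => exists n a, psd a /\ y = iota n a).

Definition one : H := iota 0 1%:M.

Definition Cbox : H -> Prop := l2closure (fun b => L2pos b /\ L2pos (one - b)).

Definition is_proj (S : H -> Prop) (a c : H) : Prop :=
  S c /\ forall b, S b -> hnorm (a - c) <= hnorm (a - b).

Definition is_Pn (P : nat -> H -> H) : Prop :=
  forall n x, (exists m, P n x = iota n m) /\
              forall m, ip (iota n m) (x - P n x) = 0.

Definition dirichlet_form (J : H -> H) (D : H -> Prop) (E : H -> R) : Prop :=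
  (D 0 /\ forall (c : C) x y, D x -> D y -> D (c *: x + y)) /\
  [/\
      (forall x, l2closure D x),
      (exists q : H -> H -> C,
         [/\ forall (c : C) x y z, D x -> D y -> D z -> q x (c *: y + z) = c * q x y + q x z,
             forall x y, D x -> D y -> q y x = conjc (q x y) &
             forall x, D x -> ((E x)%:C)%C = q x x /\ 0 <= E x]),
      (forall (u : nat -> H) x, (forall k, D (u k)) ->
         (forall e : R, 0 < e -> exists N, forall k l, (N <= k)%N -> (N <= l)%N ->
            E (u k - u l) + hnorm (u k - u l) ^+ 2 < e) ->
         (forall e : R, 0 < e -> exists N, forall k, (N <= k)%N -> hnorm (u k - x) < e) ->
         D x /\ (forall e : R, 0 < e -> exists N, forall k, (N <= k)%N -> E (u k - x) < e)),
      (forall x, D x -> D (J x) /\ E (J x) = E x) &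
      (* Markov: E(a /\ 1) <= E(a) for real a in D *)
      (forall a c, D a -> J a = a -> is_proj Cbox a c -> D c /\ E c <= E a)].

End Defs.

(* Main.v *)
Require Import Defs.
From HB Require Import structures.
From mathcomp Require Import all_boot all_order all_algebra.
From mathcomp Require Import complex.
From mathcomp Require Import reals.
From mathcomp Require Import boolp classical_sets.
From mathcomp Require Import ring lra.
Set Implicit Arguments. Unset Strict Implicit. Unset Printing Implicit Defensive.
Import Order.TTheory GRing.Theory Num.Theory.
Local Open Scope ring_scope.

Section Cx.
Variable R : realType.
Local Notation C := (R[i]).
Implicit Types x y : C.

Lemma ReM x y : complex.Re (x * y) = complex.Re x * complex.Re y - complex.Im x * complex.Im y.
Proof. by case: x => a b; case: y => c d. Qed.
Lemma ImM x y : complex.Im (x * y) = complex.Re x * complex.Im y + complex.Im x * complex.Re y.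
Proof. by case: x => a b; case: y => c d. Qed.
Lemma ReD x y : complex.Re (x + y) = complex.Re x + complex.Re y.
Proof. by case: x => a b; case: y => c d. Qed.
Lemma ImD x y : complex.Im (x + y) = complex.Im x + complex.Im y.
Proof. by case: x => a b; case: y => c d. Qed.
Lemma ReN x : complex.Re (- x) = - complex.Re x.
Proof. by case: x => a b. Qed.
Lemma ImN x : complex.Im (- x) = - complex.Im x.
Proof. by case: x => a b. Qed.
Lemma ReJ x : complex.Re (conjc x) = complex.Re x.
Proof. by case: x => a b. Qed.
Lemma ImJ x : complex.Im (conjc x) = - complex.Im x.
Proof. by case: x => a b. Qed.
Lemma ReC (r : R) : complex.Re (r%:C)%C = r. Proof. by []. Qed.
Lemma ImC (r : R) : complex.Im (r%:C)%C = 0. Proof. by []. Qed.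
Lemma Re0 : complex.Re (0 : C) = 0. Proof. by []. Qed.
Lemma Im0 : complex.Im (0 : C) = 0. Proof. by []. Qed.
Lemma Re1 : complex.Re (1 : C) = 1. Proof. by []. Qed.
Lemma Im1 : complex.Im (1 : C) = 0. Proof. by []. Qed.
Lemma cplx_eq x y : complex.Re x = complex.Re y -> complex.Im x = complex.Im y -> x = y.
Proof. by case: x => a b; case: y => c d /= -> ->. Qed.
Lemma ReB x y : complex.Re (x - y) = complex.Re x - complex.Re y.
Proof. by rewrite ReD ReN. Qed.
Lemma ImB x y : complex.Im (x - y) = complex.Im x - complex.Im y.
Proof. by rewrite ImD ImN. Qed.
Lemma conjcK' x : conjc (conjc x) = x.
Proof. by case: x => a b; apply: cplx_eq => //=; rewrite opprK. Qed.
Lemma conjcD' x y : conjc (x + y) = conjc x + conjc y.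
Proof. by case: x => a b; case: y => c d; apply: cplx_eq => //=; rewrite opprD. Qed.
Lemma conjcM' x y : conjc (x * y) = conjc x * conjc y.
Proof. case: x => a b; case: y => c d; apply: cplx_eq => /=; lra. Qed.
End Cx.

Section Form.
Set Default Proof Using "All".
Variable R : realType.
Local Notation C := (R[i]).
Local Notation Re := (@complex.Re R).
Local Notation Im := (@complex.Im R).
Variable V : lmodType C.
Variable P : V -> Prop.
Hypothesis P0 : P 0.
Hypothesis Plin : forall (c : C) x y, P x -> P y -> P (c *: x + y).
Variable f : V -> V -> C.
Hypothesis fL : forall (c : C) x y z, P x -> P y -> P z -> f x (c *: y + z) = c * f x y + f x z.
Hypothesis fH : forall x y, P x -> P y -> f y x = conjc (f x y).

Lemma PD x y : P x -> P y -> P (x + y).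
Proof. by move=> px py; have := Plin 1 px py; rewrite scale1r. Qed.
Lemma PZ (c : C) x : P x -> P (c *: x).
Proof. by move=> px; have := Plin c px P0; rewrite addr0. Qed.
Lemma PN x : P x -> P (- x).
Proof. by move=> px; have := PZ (-1) px; rewrite scaleN1r. Qed.
Lemma PB x y : P x -> P y -> P (x - y).
Proof. by move=> px py; apply: PD => //; apply: PN. Qed.

Lemma f0r x : P x -> f x 0 = 0.
Proof.
move=> px; have := fL 1 px P0 P0; rewrite scale1r addr0 mul1r.
by move=> e; have := subrr (f x 0); rewrite {1}e addrK.
Qed.
Lemma fDr x y z : P x -> P y -> P z -> f x (y + z) = f x y + f x z.
Proof. by move=> px py pz; have := fL 1 px py pz; rewrite scale1r mul1r. Qed.
Lemma fZr (c : C) x y : P x -> P y -> f x (c *: y) = c * f x y.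
Proof. by move=> px py; have := fL c px py P0; rewrite addr0 f0r // addr0. Qed.
Lemma fNr x y : P x -> P y -> f x (- y) = - f x y.
Proof. by move=> px py; rewrite -scaleN1r fZr // mulN1r. Qed.
Lemma fBr x y z : P x -> P y -> P z -> f x (y - z) = f x y - f x z.
Proof. by move=> px py pz; rewrite fDr ?fNr //; apply: PN. Qed.
Lemma f0l x : P x -> f 0 x = 0.
Proof. by move=> px; rewrite fH // f0r // conjc0. Qed.
Lemma fDl x y z : P x -> P y -> P z -> f (x + y) z = f x z + f y z.
Proof.
by move=> px py pz; rewrite (fH pz (PD px py)) fDr // conjcD' -(fH pz px) -(fH pz py).
Qed.
Lemma fZl (c : C) x y : P x -> P y -> f (c *: x) y = conjc c * f x y.
Proof. by move=> px py; rewrite (fH py (PZ c px)) fZr // conjcM' -(fH py px). Qed.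
Lemma fNl x y : P x -> P y -> f (- x) y = - f x y.
Proof. by move=> px py; rewrite -scaleN1r fZl // rmorphN1 mulN1r. Qed.
Lemma fBl x y z : P x -> P y -> P z -> f (x - y) z = f x z - f y z.
Proof. by move=> px py pz; rewrite fDl ?fNl //; apply: PN. Qed.

Variable Nf : V -> R.
Hypothesis fN : forall x, P x -> f x x = ((Nf x)%:C)%C.

Lemma Nf_expand (c : C) x y : P x -> P y ->
  Nf (x + c *: y) = Nf x + 2 * (Re c * Re (f x y) - Im c * Im (f x y))
                    + (Re c ^+ 2 + Im c ^+ 2) * Nf y.
Proof.
move=> px py.
have Pcy := PZ c py.
have e := fN (PD px Pcy).
rewrite (fDl px Pcy (PD px Pcy)) (fDr px px Pcy) (fDr Pcy px Pcy) in e.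
rewrite (fZl c py px) (fZl c py Pcy) (fZr c py py) (fZr c px py) in e.
rewrite (fN px) (fN py) (fH px py) in e.
clear Pcy; move: e; case: (f x y) => u v; case: c => a b /= e.
have := congr1 Re e => /=.
set N1 := Nf (x + _). move=> h; rewrite -h; rewrite !expr2; lra.
Qed.

Lemma Nf0 : Nf 0 = 0.
Proof. by have := fN P0; rewrite f0r // => /(congr1 Re). Qed.

Lemma Nf_add x y : P x -> P y -> Nf (x + y) = Nf x + 2 * Re (f x y) + Nf y.
Proof.
move=> px py; have := Nf_expand 1 px py; rewrite scale1r => ->.
rewrite Re1 Im1; lra.
Qed.

Lemma Nf_sub x y : P x -> P y -> Nf (x - y) = Nf x - 2 * Re (f x y) + Nf y.
Proof.
move=> px py; have := Nf_expand (-1) px py; rewrite scaleN1r => ->.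
rewrite ReN ImN Re1 Im1 !expr2; lra.
Qed.

Lemma Nf_opp x : P x -> Nf (- x) = Nf x.
Proof. by move=> px; have := Nf_sub P0 px; rewrite sub0r f0l // Nf0 Re0 => ->; lra. Qed.

Lemma Nf_scaleR (r : R) y : P y -> Nf ((r%:C)%C *: y) = r ^+ 2 * Nf y.
Proof.
move=> py; have := Nf_expand (r%:C)%C P0 py; rewrite add0r => ->.
rewrite Nf0 f0l // Re0 Im0 ReC ImC; lra.
Qed.

Hypothesis Nf_ge0 : forall x, P x -> 0 <= Nf x.

Lemma CS x y : P x -> P y ->
  Re (f x y) ^+ 2 + Im (f x y) ^+ 2 <= Nf x * Nf y.
Proof.
move=> px py.
have H r : 0 <= Nf x + 2 * (r * (Re (f x y) ^+ 2 + Im (f x y) ^+ 2)) * (-1)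
                 + r ^+ 2 * (Re (f x y) ^+ 2 + Im (f x y) ^+ 2) * Nf y.
  have := Nf_ge0 (PD px (PZ ((- r * Re (f x y)) +i* (r * Im (f x y)))%C py)).
  rewrite Nf_expand //= !expr2; lra.
move: H; set S := (_ + _ : R); have S0 : 0 <= S by rewrite /S addr_ge0 // sqr_ge0.
have nx := Nf_ge0 px; have ny := Nf_ge0 py.
move=> H.
case: (eqVneq S 0) => [->|Sn0]; first by rewrite mulr_ge0.
have Sp : 0 < S by rewrite lt_def Sn0.
case: (eqVneq (Nf y) 0) => [Ny0|Nyn0].
  have := H ((Nf x + 1) / (2 * S)).
  have -> : (Nf x + 1) / (2 * S) * S = (Nf x + 1) / 2.
    by field; rewrite Sn0.
  rewrite Ny0; lra.
have Nyp : 0 < Nf y by rewrite lt_def Nyn0.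
have := H (Nf y)^-1.
have e1 : (Nf y)^-1 ^+ 2 * S * Nf y = S / Nf y by field.
rewrite e1 => h.
have h2 : S / Nf y <= Nf x by lra.
by rewrite -(@ler_pM2r _ (Nf y)^-1) ?invr_gt0 // mulrK ?unitfE.
Qed.

End Form.

Section Reals.
Variable R : realType.
Lemma inv_small (d : R) : 0 < d -> exists K, forall k, (K <= k)%N -> (k.+1%:R)^-1 < d.
Proof.
move=> d0; have [K hK] := ltr_add_invr d0; rewrite add0r in hK.
exists K => k Kk; apply: le_lt_trans hK.
by rewrite lef_pV2 ?posrE ?ltr0n // ler_nat ltnS.
Qed.
Lemma le0_small (X : R) : (forall e : R, 0 < e -> X < e) -> X <= 0.
Proof. by move=> h; rewrite leNgt; apply/negP => /h; rewrite ltxx. Qed.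
Lemma sq2_eq0 (a b : R) : a ^+ 2 + b ^+ 2 <= 0 -> a = 0 /\ b = 0.
Proof.
move=> h; have ha : a ^+ 2 = 0 by apply/eqP; rewrite eq_le sqr_ge0 andbT; nra.
have hb : b ^+ 2 = 0 by apply/eqP; rewrite eq_le sqr_ge0 andbT; nra.
by split; apply/eqP; rewrite -sqrf_eq0 ?ha ?hb.
Qed.
Lemma lb_aux (r i n Cb : R) : 0 <= Cb -> 0 <= n -> r ^+ 2 + i ^+ 2 <= Cb * n ->
  - Cb <= n - 2 * r.
Proof.
move=> c0 n0 h.
have hi : 0 <= i ^+ 2 by rewrite sqr_ge0.
have hs := sqr_ge0 (n - Cb).
have h1 : (2 * r) ^+ 2 <= (n + Cb) ^+ 2.
  rewrite !expr2 in h hi hs *; lra.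
have h2 : 2 * r <= n + Cb by rewrite leNgt; apply/negP => hc; nra.
lra.
Qed.
End Reals.

Section Main.
Variable R : realType.
Local Notation C := (R[i]).
Local Notation Re := (@complex.Re R).
Local Notation Im := (@complex.Im R).
Variable H : lmodType C.
Variable ip : H -> H -> C.
Hypothesis ipL : forall x y z (c : C), ip x (c *: y + z) = c * ip x y + ip x z.
Hypothesis ipH : forall x y, ip y x = conjc (ip x y).
Hypothesis ipP : forall x, Im (ip x x) = 0 /\ 0 <= Re (ip x x).
Hypothesis ipD : forall x, Re (ip x x) = 0 -> x = 0.
Hypothesis ipC : forall u : nat -> H,
         (forall e : R, 0 < e -> exists N, forall k l, (N <= k)%N -> (N <= l)%N ->
            hnorm ip (u k - u l) < e) ->
         exists x, forall e : R, 0 < e -> exists N, forall k, (N <= k)%N ->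
            hnorm ip (u k - x) < e.
Variable D : H -> Prop.
Variable E : H -> R.
Variable q : H -> H -> C.
Hypothesis D0 : D 0.
Hypothesis Dlin : forall (c : C) x y, D x -> D y -> D (c *: x + y).
Hypothesis qL : forall (c : C) x y z, D x -> D y -> D z -> q x (c *: y + z) = c * q x y + q x z.
Hypothesis qH : forall x y, D x -> D y -> q y x = conjc (q x y).
Hypothesis qE : forall x, D x -> ((E x)%:C)%C = q x x /\ 0 <= E x.
Hypothesis Dclosed : forall (u : nat -> H) x, (forall k, D (u k)) ->
         (forall e : R, 0 < e -> exists N, forall k l, (N <= k)%N -> (N <= l)%N ->
            E (u k - u l) + hnorm ip (u k - u l) ^+ 2 < e) ->
         (forall e : R, 0 < e -> exists N, forall k, (N <= k)%N -> hnorm ip (u k - x) < e) ->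
         D x /\ (forall e : R, 0 < e -> exists N, forall k, (N <= k)%N -> E (u k - x) < e).

Definition hn2 x := Re (ip x x).
Definition Nm x := E x + hn2 x.
Definition s x y := q x y + ip x y.

Let T : H -> Prop := fun _ => True.
Let T0 : T 0. Proof. by []. Qed.
Let Tlin : forall (c : C) x y, T x -> T y -> T (c *: x + y). Proof. by []. Qed.
Let ipL' : forall (c : C) x y z, T x -> T y -> T z -> ip x (c *: y + z) = c * ip x y + ip x z.
Proof. by move=> c x y z _ _ _; apply: ipL. Qed.
Let ipH' : forall x y, T x -> T y -> ip y x = conjc (ip x y).
Proof. by move=> x y _ _; apply: ipH. Qed.
Lemma ip_N x : T x -> ip x x = ((hn2 x)%:C)%C.
Proof. by move=> _; apply: cplx_eq => //=; case: (ipP x). Qed.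
Lemma hn2_ge0 x : T x -> 0 <= hn2 x.
Proof. by move=> _; case: (ipP x). Qed.
Lemma hnormE x : hnorm ip x ^+ 2 = hn2 x.
Proof. by rewrite /hnorm sqr_sqrtr //; case: (ipP x). Qed.
Lemma hnorm_ge0 x : 0 <= hnorm ip x.
Proof. by rewrite /hnorm sqrtr_ge0. Qed.
Lemma hnorm_lt x e : 0 < e -> hn2 x < e ^+ 2 -> hnorm ip x < e.
Proof.
move=> e0; rewrite -hnormE => h; have := hnorm_ge0 x; nra.
Qed.
Lemma hnorm_lt' x e : hnorm ip x < e -> hn2 x < e ^+ 2.
Proof. by rewrite -hnormE => h; have := hnorm_ge0 x; nra. Qed.

Let sL : forall (c : C) x y z, D x -> D y -> D z -> s x (c *: y + z) = c * s x y + s x z.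
Proof. by move=> c x y z dx dy dz; rewrite /s qL // ipL; ring. Qed.
Let sH : forall x y, D x -> D y -> s y x = conjc (s x y).
Proof. by move=> x y dx dy; rewrite /s qH // ipH conjcD'. Qed.
Lemma s_N x : D x -> s x x = ((Nm x)%:C)%C.
Proof.
move=> dx; rewrite /s -(proj1 (qE dx)) ip_N //.
apply: cplx_eq => /=; rewrite ?addr0 //.
Qed.
Lemma Nm_ge0 x : D x -> 0 <= Nm x.
Proof. by move=> dx; rewrite /Nm addr_ge0 ?hn2_ge0 //; case: (qE dx). Qed.
Lemma hn2_le_Nm x : D x -> hn2 x <= Nm x.
Proof. by move=> dx; rewrite /Nm lerDr; case: (qE dx). Qed.

Definition DD := PD D0 Dlin sL sH.
Definition DZ := PZ D0 Dlin sL sH.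
Definition DN := PN D0 Dlin sL sH.
Definition DB := PB D0 Dlin sL sH.
Definition sDl := fDl D0 Dlin sL sH.
Definition sDr := fDr D0 Dlin sL sH.
Definition sZl := fZl D0 Dlin sL sH.
Definition sZr := fZr D0 Dlin sL sH.
Definition sBl := fBl D0 Dlin sL sH.
Definition sBr := fBr D0 Dlin sL sH.
Definition s0l := f0l D0 Dlin sL sH.
Definition s0r := f0r D0 Dlin sL sH.
Definition Nm_expand := Nf_expand D0 Dlin sL sH s_N.
Definition Nm_add := Nf_add D0 Dlin sL sH s_N.
Definition Nm_sub := Nf_sub D0 Dlin sL sH s_N.
Definition Nm_opp := Nf_opp D0 Dlin sL sH s_N.
Definition Nm_scaleR := Nf_scaleR D0 Dlin sL sH s_N.
Definition Nm0 := Nf0 D0 Dlin sL sH s_N.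
Definition sCS := CS D0 Dlin sL sH s_N Nm_ge0.
Definition ipDl := fDl T0 Tlin ipL' ipH'.
Definition ipBl := fBl T0 Tlin ipL' ipH'.
Definition ipBr := fBr T0 Tlin ipL' ipH'.
Definition ipDr := fDr T0 Tlin ipL' ipH'.
Definition ipZl := fZl T0 Tlin ipL' ipH'.
Definition ip0l := f0l T0 Tlin ipL' ipH'.
Definition ip0r := f0r T0 Tlin ipL' ipH'.
Definition hn2_add := Nf_add T0 Tlin ipL' ipH' ip_N.
Definition hn2_sub := Nf_sub T0 Tlin ipL' ipH' ip_N.
Definition hn2_opp := Nf_opp T0 Tlin ipL' ipH' ip_N.
Definition ipCS := CS T0 Tlin ipL' ipH' ip_N hn2_ge0.

Lemma hn2_conv (u : nat -> H) x :
  (forall e : R, 0 < e -> exists N, forall k, (N <= k)%N -> hnorm ip (u k - x) < e) ->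
  forall e : R, 0 < e -> exists N, forall k, (N <= k)%N -> hn2 (u k - x) < e.
Proof.
move=> h e e0; have sq0 : 0 < Num.sqrt e by rewrite sqrtr_gt0.
have [N hN] := h _ sq0.
exists N => k /hN /hnorm_lt'; by rewrite sqr_sqrtr // ltW.
Qed.

Section Minim.
Variable S : H -> Prop.
Hypothesis SD : forall x, S x -> D x.
Hypothesis S0 : S 0.
Hypothesis Slin : forall (c : C) x y, S x -> S y -> S (c *: x + y).
Variable phi : H -> C.
Hypothesis phiL : forall (c : C) x y, S x -> S y -> phi (c *: x + y) = conjc c * phi x + phi y.
Variable Cb : R.
Hypothesis Cb0 : 0 <= Cb.
Hypothesis phiB : forall x, S x -> Re (phi x) ^+ 2 + Im (phi x) ^+ 2 <= Cb * Nm x.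

Let SDD x y : S x -> S y -> S (x + y).
Proof. by move=> sx sy; have := Slin 1 sx sy; rewrite scale1r. Qed.
Let SZ (c : C) x : S x -> S (c *: x).
Proof. by move=> sx; have := Slin c sx S0; rewrite addr0. Qed.

Let phi0 : phi 0 = 0.
Proof.
have := phiL 1 S0 S0; rewrite scale1r addr0 conjc1 mul1r => e.
by have := subrr (phi 0); rewrite {1}e addrK.
Qed.
Let phiD x y : S x -> S y -> phi (x + y) = phi x + phi y.
Proof. by move=> sx sy; have := phiL 1 sx sy; rewrite scale1r conjc1 mul1r. Qed.
Let phiZ (c : C) x : S x -> phi (c *: x) = conjc c * phi x.
Proof. by move=> sx; have := phiL c sx S0; rewrite !addr0 phi0 addr0. Qed.

Definition Phi u := Nm u - 2 * Re (phi u).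

Let Phi_lb u : S u -> - Cb <= Phi u.
Proof.
move=> su; have := phiB su; have := Nm_ge0 (SD su); rewrite /Phi.
move=> n0 h; exact: lb_aux Cb0 n0 h.
Qed.

Definition PhiSet : set R := fun y => exists u, S u /\ Phi u = y.
Definition mPhi := inf PhiSet.

Let PhiSet_ne : (PhiSet !=set0)%classic.
Proof. by exists (Phi 0), 0. Qed.
Let PhiSet_lb : has_lbound PhiSet.
Proof. by exists (- Cb) => y [u [su <-]]; apply: Phi_lb. Qed.
Let m_le u : S u -> mPhi <= Phi u.
Proof. by move=> su; apply: ge_inf => //; exists u. Qed.
Let m_approx (d : R) : 0 < d -> exists u, S u /\ Phi u < mPhi + d.
Proof.
move=> d0; have : mPhi < mPhi + d by rewrite ltrDl.
by case/(inf_lt PhiSet_ne) => y [u [su <-]] h; exists u.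
Qed.

Let Nm_mid x y : S x -> S y -> Nm (x - y) <= 2 * Phi x + 2 * Phi y - 4 * mPhi.
Proof.
move=> sx sy.
have dx := SD sx; have dy := SD sy.
have hm := m_le (SZ ((2^-1)%:C)%C (SDD sx sy)).
rewrite /Phi (Nm_scaleR _ (DD dx dy)) (phiZ _ (SDD sx sy)) (phiD sx sy) in hm.
have e1 : Re (conjc ((2^-1)%:C)%C * (phi x + phi y)) = 2^-1 * (Re (phi x) + Re (phi y)).
  by rewrite conjc_real ReM ReD ReC ImC mul0r subr0.
rewrite e1 in hm.
have ha := Nm_add dx dy; have hs := Nm_sub dx dy.
rewrite /Phi.
have e2 : (2^-1 : R) ^+ 2 = 4^-1 by rewrite expr2 -invfM; congr (_^-1); rewrite -natrM.
rewrite e2 in hm.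
set A := Nm (x + y) in ha hm. set B := Nm (x - y) in hs *.
set a := Re (phi x) in hm *. set b := Re (phi y) in hm *.
have h4 : (4^-1 : R) * A = A / 4 by rewrite mulrC.
have h2 : 2 * ((2^-1 : R) * (a + b)) = a + b by rewrite mulrA divff ?mul1r // pnatr_eq0.
rewrite h4 h2 in hm.
lra.
Qed.

Lemma minim : exists f, D f /\ (forall v, S v -> s v f = phi v) /\
  (forall e : R, 0 < e -> exists u, S u /\ Nm (u - f) < e).
Proof.
have hch : forall k : nat, exists u, S u /\ Phi u < mPhi + (k.+1%:R)^-1.
  by move=> k; apply: m_approx; rewrite invr_gt0 ltr0n.
have [u hu] := choice hch.
have Su k : S (u k) by case: (hu k).
have Du k : D (u k) by apply: SD.
have Cau : forall e : R, 0 < e -> exists N, forall k l, (N <= k)%N -> (N <= l)%N -> Nm (u k - u l) < e.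
  move=> e e0; have e4 : 0 < e / 4 by rewrite divr_gt0.
  have [K hK] := inv_small e4; exists K => k l hk hl.
  have := Nm_mid (Su k) (Su l); have := proj2 (hu k); have := proj2 (hu l).
  have := hK k hk; have := hK l hl.
  move: (Nm (u k - u l)) (Phi (u k)) (Phi (u l)) mPhi (l.+1%:R^-1) (k.+1%:R^-1) => A B C' M il ik; lra.
have Cau2 : forall e : R, 0 < e -> exists N, forall k l, (N <= k)%N -> (N <= l)%N ->
    hnorm ip (u k - u l) < e.
  move=> e e0; have e2 : 0 < e ^+ 2 by rewrite exprn_gt0.
  have [N hN] := Cau _ e2; exists N => k l hk hl; apply: (@hnorm_lt (u k - u l) e e0).
  have := hN k l hk hl; have := hn2_le_Nm (DB (Du k) (Du l)).
  move: (hn2 _) (Nm _) => A B; lra.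
have [f hf] := ipC Cau2.
have [Df hE] : D f /\ (forall e : R, 0 < e -> exists N, forall k, (N <= k)%N -> E (u k - f) < e).
  apply: Dclosed => // e e0; have [N hN] := Cau _ e0; exists N => k l hk hl.
  by rewrite hnormE; apply: hN.
have hh := hn2_conv hf.
have Nconv : forall e : R, 0 < e -> exists N, forall k, (N <= k)%N -> Nm (u k - f) < e.
  move=> e e0; have e2 : 0 < e / 2 by rewrite divr_gt0.
  have [N1 h1] := hE _ e2; have [N2 h2] := hh _ e2.
  exists (maxn N1 N2) => k; rewrite geq_max => /andP[k1 k2].
  have := h1 k k1; have := h2 k k2; rewrite /Nm; lra.
exists f; split => //; split; last first.
  move=> e e0; have [N hN] := Nconv e e0; exists (u N); split => //.
  exact: hN N (leqnn N).
move=> v sv; have dv := SD sv.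
set z := s f v - conjc (phi v).
suff : Re z ^+ 2 + Im z ^+ 2 <= 0.
  case/sq2_eq0 => h1 h2.
  have : z = 0 by apply: cplx_eq.
  rewrite /z => /eqP; rewrite subr_eq0 => /eqP e.
  by rewrite (sH Df dv) e conjcK'.
apply: le0_small => eps eps0.
set Nv := Nm v.
have Nv0 : 0 <= Nv := Nm_ge0 dv.
have zk_bound : forall k, Re (s (u k) v - conjc (phi v)) ^+ 2 + Im (s (u k) v - conjc (phi v)) ^+ 2
                  <= (Nv + 1) * (k.+1%:R)^-1.
  move=> k.
  set r := (Nv + 1)^-1.
  have r0 : 0 < r by rewrite invr_gt0; lra.
  have rN : r * (Nv + 1) = 1 by rewrite mulVf //; lra.
  set a := Re (s (u k) v - conjc (phi v)).
  set b := Im (s (u k) v - conjc (phi v)).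
  set t : C := ((- r * a) +i* (r * b))%C.
  have hm := m_le (SDD (Su k) (SZ t sv)).
  rewrite /Phi (Nm_expand t (Du k) dv) (phiD (Su k) (SZ t sv)) (phiZ t sv) in hm.
  have := proj2 (hu k); rewrite /Phi => hk.
  rewrite (ReD (phi (u k))) (ReM (conjc t)) (ReJ (t)) (ImJ (t)) in hm.
  have Ret : Re t = - r * a by [].
  have Imt : Im t = r * b by [].
  rewrite Ret Imt in hm.
  have ea : a = Re (s (u k) v) - Re (phi v) by rewrite /a (ReB (s (u k) v)) ReJ.
  have eb : b = Im (s (u k) v) + Im (phi v) by rewrite /b (ImB (s (u k) v)) ImJ opprK.
  clearbody t; clear Ret Imt.
  rewrite /Nv in hm rN *.
  have Nv0' := Nv0; rewrite /Nv in Nv0'.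
  have iv0 : 0 <= k.+1%:R^-1 :> R by rewrite invr_ge0.
  move: hm hk ea eb rN r0 Nv0' iv0.
  move: (Re (s (u k) v)) (Im (s (u k) v)) (Re (phi v)) (Im (phi v)) (Nm (u k))
        (Re (phi (u k))) (k.+1%:R^-1) (Nm v) mPhi a b r => rs is_ rp ip_ nu ru iv nv M a' b' r'.
  move=> hm hk ea eb rN r0 nv0 iv0.
  set Z := a' ^+ 2 + b' ^+ 2.
  have Z0 : 0 <= Z by rewrite /Z addr_ge0 // sqr_ge0.
  have hm' : 2 * r' * Z - r' ^+ 2 * Z * nv < iv.
    rewrite /Z; subst a' b'; rewrite !expr2 in hm hk *; lra.
  have hrN : r' * nv <= 1 by nra.
  have h3 : r' * Z < iv by nra.
  have : (nv + 1) * (r' * Z) <= (nv + 1) * iv by rewrite ler_pM2l ?ltW //; lra.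
  by rewrite mulrA (mulrC (nv + 1)) rN mul1r.
have e4 : 0 < eps / (4 * (Nv + 1)) by rewrite divr_gt0 // mulr_gt0 //; lra.
have [K1 hK1] := inv_small e4.
have [K2 hK2] := Nconv _ e4.
set k := maxn K1 K2.
have k1 : (K1 <= k)%N by rewrite leq_maxl.
have k2 : (K2 <= k)%N by rewrite leq_maxr.
have hb := zk_bound k.
have hcs := sCS (DB Df (Du k)) dv.
rewrite (sBl Df (Du k) dv) in hcs.
have hopp : Nm (f - u k) = Nm (u k - f) by rewrite -opprB (Nm_opp (DB (Du k) Df)).
rewrite hopp -/Nv in hcs.
have hi1 := hK1 k k1; have hi2 := hK2 k k2.
have ez : z = (s (u k) v - conjc (phi v)) + (s f v - s (u k) v) by rewrite /z; ring.
rewrite ez ReD ImD.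
move: hb hcs hi1 hi2.
set a := Re (s (u k) v - _); set b := Im (s (u k) v - _).
set c := Re (s f v - _); set d := Im (s f v - _).
set iv := (k.+1%:R)^-1; set w := Nm (u k - f); set ee := eps / (4 * (Nv + 1)).
move=> hb hcs hi1 hi2.
have hee : ee * (4 * (Nv + 1)) = eps by rewrite /ee mulfVK // mulf_neq0 //; lra.
have w0 : 0 <= w by apply: Nm_ge0; apply: DB.
have iv0 : 0 <= iv by rewrite invr_ge0.
have h1 : (Nv + 1) * iv <= (Nv + 1) * ee by rewrite ler_pM2l ?ltW //; lra.
have h2 : w * Nv <= ee * Nv by apply: ler_wpM2r => //; apply: ltW.
have hsq : (a + c) ^+ 2 + (b + d) ^+ 2 <= 2 * (a ^+ 2 + b ^+ 2) + 2 * (c ^+ 2 + d ^+ 2).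
  have := sqr_ge0 (a - c); have := sqr_ge0 (b - d); rewrite !expr2; lra.
rewrite !expr2 in hsq hb hcs *. 
nra.
Qed.

End Minim.

Section Fin.
Variable iota : forall n : nat, 'M[C]_(2 ^ n) -> H.
Arguments iota : clear implicits.
Hypothesis iota_d2 : forall n a, iota n.+1 (diag2 a) = iota n a.
Hypothesis iotaL : forall n (c : C) a b, iota n (c *: a + b) = c *: iota n a + iota n b.
Hypothesis dense : forall x (e : R), 0 < e -> exists n a, hnorm ip (x - iota n a) < e.
Variable P : nat -> H -> H.
Hypothesis HP : forall n x, (exists m, P n x = iota n m) /\
              forall m, ip (iota n m) (x - P n x) = 0.
Hypothesis UD : forall x, in_union iota x -> D x.
Hypothesis Hconv : forall a, D a -> forall e : R, 0 < e -> exists N, forall n, (N <= n)%N ->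
     `|E (P n a) - E a| < e.

Lemma iota0 n : iota n 0 = 0.
Proof.
have := @iotaL n 1 0 0; rewrite !scale1r addr0 => e.
by have := subrr (iota n 0); rewrite {1}e addrK.
Qed.
Lemma iotaB n a b : iota n (a - b) = iota n a - iota n b.
Proof. by have := @iotaL n (-1) b a; rewrite !scaleN1r addrC => ->; rewrite addrC. Qed.

Lemma lift n a m : (n <= m)%N -> exists b, iota n a = iota m b.
Proof.
elim: m => [|m IH].
  by rewrite leqn0 => /eqP e; subst n; exists a.
rewrite leq_eqVlt => /orP[/eqP e|]; first by subst n; exists a.
rewrite ltnS => /IH [b ->]; exists (diag2 b); by rewrite iota_d2.
Qed.

Lemma U0 : in_union iota 0.
Proof. by exists 0%N, 0; rewrite iota0. Qed.
Lemma Ulin (c : C) x y : in_union iota x -> in_union iota y -> in_union iota (c *: x + y).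
Proof.
move=> [n [a ->]] [m [b ->]].
have [a' ->] := lift a (leq_addr m n).
have [b' ->] := lift b (leq_addl n m).
by exists (n + m)%N, (c *: a' + b'); rewrite iotaL.
Qed.
Lemma PU n x : in_union iota (P n x).
Proof. by have [[m ->] _] := HP n x; exists n, m. Qed.

Lemma P_orth n x b : hn2 (x - iota n b) = hn2 (x - P n x) + hn2 (P n x - iota n b).
Proof.
have [[m em] hm] := HP n x.
have -> : x - iota n b = (x - P n x) + (P n x - iota n b) by rewrite addrA subrK.
rewrite (@hn2_add (x - P n x) (P n x - iota n b) I I).
have -> : ip (x - P n x) (P n x - iota n b) = 0.
  by rewrite ipH {1}em -iotaB hm conjc0.
by rewrite Re0 mulr0 addr0.
Qed.

Lemma P_conv x : forall e : R, 0 < e -> exists N, forall n, (N <= n)%N -> hn2 (x - P n x) < e.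
Proof.
move=> e e0; have sq0 : 0 < Num.sqrt e by rewrite sqrtr_gt0.
have [N [a ha]] := dense x sq0.
exists N => n Nn; have [b eb] := lift a Nn.
have := hnorm_lt' ha; rewrite sqr_sqrtr ?ltW // eb P_orth => h.
have := @hn2_ge0 (P n x - iota n b) I; move: h.
move: (hn2 _) (hn2 _) => A B; lra.
Qed.

Lemma hn2_P n x : hn2 (P n x) = hn2 x - hn2 (x - P n x).
Proof.
have := @P_orth n x 0; rewrite iota0 !subr0 => ->.
move: (hn2 _) (hn2 _) => A B; lra.
Qed.

Lemma Nm_P_conv h : D h -> forall e : R, 0 < e -> exists N, forall n, (N <= n)%N ->
  `|Nm (P n h) - Nm h| < e.
Proof.
move=> dh e e0; have e2 : 0 < e / 2 by rewrite divr_gt0.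
have [N1 h1] := Hconv dh e2; have [N2 h2] := P_conv h e2.
exists (maxn N1 N2) => n; rewrite geq_max => /andP[n1 n2].
have := h1 n n1; have := h2 n n2; rewrite /Nm hn2_P.
have := @hn2_ge0 (h - P n h) I.
move: (E (P n h)) (E h) (hn2 h) (hn2 (h - P n h)) => a b c d.
rewrite !ltr_norml. lra.
Qed.

Lemma resolv_conv h k : D h -> (forall x, D x -> s x h = ip x k) ->
  forall e : R, 0 < e -> exists n, Nm (h - P n h) < e.
Proof.
move=> dh hk e e0.
have e2 : 0 < e / 2 by rewrite divr_gt0.
set c := e ^+ 2 / (16 * (hn2 k + 1)).
have hk0 := @hn2_ge0 k I.
have c0 : 0 < c by rewrite divr_gt0 ?exprn_gt0 // mulr_gt0 //; lra.
have [N1 h1] := Nm_P_conv dh e2; have [N2 h2] := P_conv h c0.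
set n := maxn N1 N2.
have n1 : (N1 <= n)%N by rewrite leq_maxl.
have n2 : (N2 <= n)%N by rewrite leq_maxr.
exists n.
have dP : D (P n h) by apply: UD; apply: PU.
rewrite (Nm_sub dh dP).
have e3 : s h (P n h) = conjc (s (P n h) h) by rewrite (sH dP dh).
rewrite e3 ReJ (hk _ dP).
have e4 : Nm h = Re (ip h k) by rewrite -(hk _ dh) s_N.
rewrite e4.
have hcs := @ipCS (h - P n h) k I I.
rewrite (@ipBl h (P n h) k I I I) in hcs.
have hn := h1 n n1; have hh := h2 n n2.
rewrite e4 in hn.
move: hcs hn hh; rewrite ReB ImB.
have ec : c * (16 * (hn2 k + 1)) = e ^+ 2 by rewrite /c mulfVK // mulf_neq0 //; lra.
have hd0 := @hn2_ge0 (h - P n h) I.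
move: ec hd0; clearbody c.
move: (Re (ip h k)) (Re (ip (P n h) k)) (Im (ip h k)) (Im (ip (P n h) k)) (Nm (P n h)) (hn2 (h - P n h)) => a b a' b' np d.
move=> ec hd0 hcs hn hh.
rewrite ltr_norml in hn; case/andP: hn => hn1 hn2'.
have hd : d * hn2 k <= c * hn2 k by apply: ler_wpM2r => //; apply: ltW.
have hsq : (a - b) ^+ 2 < (e / 4) ^+ 2.
  have e16 : (e / 4) ^+ 2 = e ^+ 2 / 16 by rewrite !expr2; field.
  have -> : (e / 4) ^+ 2 = c * (hn2 k + 1) by rewrite e16 -ec; field.
  have := sqr_ge0 (a' - b'); move: hcs hd c0.
  rewrite mulrDr mulr1; move: (c * hn2 k) (d * hn2 k) ((a - b) ^+ 2) ((a' - b') ^+ 2) => ch dkh X Y; lra.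
have hab : a - b < e / 4.
  rewrite ltNge; apply/negP => hc.
  have e40 : 0 <= e / 4 by rewrite divr_ge0 // ltW.
  have : (e / 4) ^+ 2 <= (a - b) ^+ 2 by rewrite ler_pXn2r // nnegrE //; lra.
  lra.
lra.
Qed.

Lemma core a : D a -> forall e : R, 0 < e -> exists x, in_union iota x /\ Nm (x - a) < e.
Proof.
move=> da.
have phiL1 : forall (c : C) x y, in_union iota x -> in_union iota y ->
    s (c *: x + y) a = conjc c * s x a + s y a.
  move=> c x y ux uy; have dx := UD ux; have dy := UD uy.
  by rewrite (sDl (DZ c dx) dy da) (sZl c dx da).
have phiB1 : forall x, in_union iota x ->
    Re (s x a) ^+ 2 + Im (s x a) ^+ 2 <= Nm a * Nm x.
  by move=> x ux; rewrite mulrC; exact: sCS (UD ux) da.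
have [f [Df [hf happ]]] := minim UD U0 Ulin phiL1 (Nm_ge0 da) phiB1.
pose g := a - f.
have dg : D g := DB da Df.
have hg : forall v, in_union iota v -> s v g = 0.
  by move=> v uv; rewrite (sBr (UD uv) da Df) (hf v uv) subrr.
have phiL2 : forall (c : C) x y, D x -> D y -> ip (c *: x + y) g = conjc c * ip x g + ip y g.
  by move=> c x y _ _; rewrite (@ipDl (c *: x) y g I I I) (@ipZl c x g I I).
have phiB2 : forall x, D x -> Re (ip x g) ^+ 2 + Im (ip x g) ^+ 2 <= hn2 g * Nm x.
  move=> x dx; have := @ipCS x g I I; have := hn2_le_Nm dx; have := @hn2_ge0 g I.
  move=> h0 h1 h2; apply: (le_trans h2); rewrite mulrC; exact: ler_wpM2l.
have [h [Dh [hh _]]] := minim (fun x dx => dx) D0 Dlin phiL2 (@hn2_ge0 g I) phiB2.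
have hgh : s g h = ip g g := hh g dg.
have sgh0 : Re (s g h) ^+ 2 + Im (s g h) ^+ 2 <= 0.
  apply: le0_small => eps eps0.
  have ng := Nm_ge0 dg.
  have hpos : 0 < Nm g + 1 by apply: ltr_wpDl ng ltr01.
  have c0 : 0 < eps / (Nm g + 1) by rewrite divr_gt0.
  have [n hn] := resolv_conv Dh hh c0.
  have dP : D (P n h) by apply: UD; apply: PU.
  have e1 : s g h = s g (h - P n h).
    by rewrite (sBr dg Dh dP) (sH dP dg) (hg _ (PU n h)) conjc0 subr0.
  rewrite e1; have hc := sCS dg (DB Dh dP).
  have hN := Nm_ge0 (DB Dh dP).
  have h2 : Nm g * Nm (h - P n h) <= Nm g * (eps / (Nm g + 1)).
    by apply: ler_wpM2l => //; apply: ltW.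
  have e2 : Nm g * (eps / (Nm g + 1)) = eps - eps / (Nm g + 1).
    by field; apply: lt0r_neq0.
  rewrite e2 in h2.
  move: hc h2 c0; move: (Re _ ^+ 2 + Im _ ^+ 2) (Nm g * Nm (h - P n h)) (eps / (Nm g + 1)) => X Y Z.
  lra.
have [h1 _] := sq2_eq0 sgh0.
have g0 : g = 0 by apply: ipD; rewrite -hgh.
have fa : f = a by apply/esym/subr0_eq.
by rewrite -fa.
Qed.

Lemma core' a : D a -> forall e : R, 0 < e ->
  exists x, in_union iota x /\ E (a - x) + hnorm ip (a - x) ^+ 2 < e ^+ 2.
Proof.
move=> da e e0; have e2 : 0 < e ^+ 2 by rewrite exprn_gt0.
have [x [ux hx]] := core da e2; exists x; split => //.
have dx := UD ux.
by rewrite hnormE -/(Nm (a - x)) -opprB (Nm_opp (DB dx da)).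
Qed.

End Fin.

End Main.


Theorem theorem2p5 (R : realType) (H : lmodType R[i]) (ip : H -> H -> R[i])
  (iota : forall n : nat, 'M[R[i]]_(2 ^ n) -> H) (J : H -> H)
  (P : nat -> H -> H) (D : H -> Prop) (E : H -> R) :
  hilbert_space ip ->
  is_L2_hyperfinite ip iota ->
  is_J ip iota J ->
  is_Pn ip iota P ->
  dirichlet_form ip iota J D E ->
  (forall x, in_union iota x -> D x) ->
  (forall a, D a -> forall e : R, 0 < e -> exists N, forall n, (N <= n)%N ->
     `|E (P n a) - E a| < e) ->
  forall a, D a -> forall e : R, 0 < e ->
    exists x, in_union iota x /\ E (a - x) + hnorm ip (a - x) ^+ 2 < e ^+ 2.
Proof.
move=> hs hl _ hP hd UD Hc.
case: hs => ipL ipH ipP ipD ipC.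
case: hl => d2 iL _ dn.
case: hd => [[D0 Dlin] [_ [q [qL qH qE]] Dcl _ _]].
move=> a da e e0.
exact: (core' ipL ipH ipP ipD ipC D0 Dlin qL qH qE Dcl d2 iL dn hP UD Hc da e0).
Qed.
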